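(* Let $C\in(\frac{\beta u_0-1}{r},\frac{\beta u_0}{r})$ with $C<\xi_1(\beta)$. Then there exists a unique $z_f^C\in(0,d)$ such that the function $f_C=F_{z_f^C}\mathbf 1_{[0,z_f^C]}+G_{C,z_f^C}\mathbf 1_{(z_f^C,d]}$ solves Problem 1 with $f_C'(0)=0$ and $f_C(d)=C$. Moreover, the map $C\mapsto z_f^C$ is increasing and $z_f^{\xi_1(\beta)}=d$, where for $C=\xi_1(\beta)$ the quantity $z_f^C$ denotes the point $s\in(0,d]$ with $F_s(s)=G_{C,s}(s)$.
   Context: Fix $\mu\in\mathbb R$, $\sigma>0$, $u_0>0$, $r>0$, $\beta>0$, $d>0$. For $u\in[0,u_0]$ let $\theta_1(u)=\frac{\sqrt{(\mu-u)^2+2r\sigma^2}+(\mu-u)}{\sigma^2}$, $\theta_2(u)=\frac{\sqrt{(\mu-u)^2+2r\sigma^2}-(\mu-u)}{\sigma^2}$; write $\alpha_i=\theta_i(u_0)$, $\gamma_i=\theta_i(0)$ ($i=1,2$). Let $\xi_1(\beta)=\frac{\beta u_0}{r}-\beta\frac{e^{\alpha_1d}+\frac{\alpha_1}{\alpha_2}e^{-\alpha_2d}}{\alpha_1(e^{\alpha_1d}-e^{-\alpha_2d})}$. For $s\in(0,d]$ and real $C$ define on $[0,d]$ $$F_s(z)=\frac{\beta u_0}{r}-\beta\frac{e^{\alpha_1z}+\frac{\alpha_1}{\alpha_2}e^{-\alpha_2z}}{\alpha_1(e^{\alpha_1s}-e^{-\alpha_2s})},$$ $$G_{C,s}(z)=\frac{C\gamma_2e^{-\gamma_2(s-d)}-\beta}{\gamma_1e^{\gamma_1s}+\gamma_2e^{(\gamma_1+\gamma_2)d}e^{-\gamma_2s}}\big(e^{\gamma_1z}-e^{(\gamma_1+\gamma_2)d}e^{-\gamma_2z}\big)+Ce^{-\gamma_2(z-d)}.$$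 Problem 1: a bounded twice continuously differentiable function $f$ on $[0,d]$ satisfying $-rf(z)-\mu f'(z)+\frac{\sigma^2}{2}f''(z)+\sup_{u\in[0,u_0]}\{(\beta+f'(z))u\}=0$ for $z\in[0,d]$ (one-sided derivatives at endpoints). *)

(* Defs.v *)
From Stdlib Require Import Reals.
Open Scope R_scope.

Definition theta1 (mu sigma r u : R) : R :=
  (sqrt ((mu - u) ^ 2 + 2 * r * sigma ^ 2) + (mu - u)) / sigma ^ 2.
Definition theta2 (mu sigma r u : R) : R :=
  (sqrt ((mu - u) ^ 2 + 2 * r * sigma ^ 2) - (mu - u)) / sigma ^ 2.

Definition xi1 (mu sigma u0 r beta d : R) : R :=
  let a1 := theta1 mu sigma r u0 in
  let a2 := theta2 mu sigma r u0 in
  beta * u0 / r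
  - beta * (exp (a1 * d) + a1 / a2 * exp (- a2 * d))
      / (a1 * (exp (a1 * d) - exp (- a2 * d))).

Definition Ffun (mu sigma u0 r beta s z : R) : R :=
  let a1 := theta1 mu sigma r u0 in
  let a2 := theta2 mu sigma r u0 in
  beta * u0 / r
  - beta * (exp (a1 * z) + a1 / a2 * exp (- a2 * z))
      / (a1 * (exp (a1 * s) - exp (- a2 * s))).

Definition Gfun (mu sigma r beta d C s z : R) : R :=
  let g1 := theta1 mu sigma r 0 in
  let g2 := theta2 mu sigma r 0 in
  (C * g2 * exp (- g2 * (s - d)) - beta)
    / (g1 * exp (g1 * s) + g2 * exp ((g1 + g2) * d) * exp (- g2 * s))
    * (exp (g1 * z) - exp ((g1 + g2) * d) * exp (- g2 * z))
  + C * exp (- g2 * (z - d)).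

(* f_C = F_s 1_[0,s] + G_{C,s} 1_(s,d]  (values outside [0,d] are irrelevant) *)
Definition fC (mu sigma u0 r beta d C s : R) (z : R) : R :=
  if Rle_dec z s then Ffun mu sigma u0 r beta s z
  else Gfun mu sigma r beta d C s z.

Definition has_deriv_on (a b : R) (f f' : R -> R) : Prop :=
  forall x, a <= x <= b ->
  forall eps, 0 < eps -> exists delta, 0 < delta /\
    forall y, a <= y <= b -> y <> x -> Rabs (y - x) < delta ->
      Rabs ((f y - f x) / (y - x) - f' x) < eps.

Definition cont_on (a b : R) (f : R -> R) : Prop :=
  forall x, a <= x <= b ->
  forall eps, 0 < eps -> exists delta, 0 < delta /\
    forall y, a <= y <= b -> Rabs (y - x) < delta -> Rabs (f y - f x) < eps.

Definition solves_problem1 (mu sigma u0 r beta d : R) (f f1 f2 : R -> R) : Prop :=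
  (exists M, forall z, 0 <= z <= d -> Rabs (f z) <= M) /\
  has_deriv_on 0 d f f1 /\ has_deriv_on 0 d f1 f2 /\ cont_on 0 d f2 /\
  forall z, 0 <= z <= d ->
    exists S, is_lub (fun y => exists u, 0 <= u <= u0 /\ y = (beta + f1 z) * u) S /\
      - r * f z - mu * f1 z + sigma ^ 2 / 2 * f2 z + S = 0.

Definition good_switch (mu sigma u0 r beta d C z : R) : Prop :=
  0 < z < d /\
  exists f1 f2 : R -> R,
    solves_problem1 mu sigma u0 r beta d (fC mu sigma u0 r beta d C z) f1 f2 /\
    f1 0 = 0 /\ fC mu sigma u0 r beta d C z d = C.

Definition admissible (mu sigma u0 r beta d C : R) : Prop :=
  (beta * u0 - 1) / r < C < beta * u0 / r /\ C < xi1 mu sigma u0 r beta d.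

(* Main.v *)
Require Import Defs.
From Stdlib Require Import Reals Lra Psatz.
From Coquelicot Require Import Coquelicot.
Open Scope R_scope.

Definition Fa a1 a2 b u0 r s z := b*u0/r - b*(exp(a1*z) + a1/a2*exp(-a2*z))/(a1*(exp(a1*s)-exp(-a2*s))).
Definition Fd1 a1 a2 b s z := -b*(exp(a1*z) - exp(-a2*z))/(exp(a1*s)-exp(-a2*s)).
Definition Fd2 a1 a2 b s z := -b*(a1*exp(a1*z) + a2*exp(-a2*z))/(exp(a1*s)-exp(-a2*s)).
Definition Fd3 a1 a2 b s z := -b*(a1^2*exp(a1*z) - a2^2*exp(-a2*z))/(exp(a1*s)-exp(-a2*s)).

Definition Ga g1 g2 b d C s z :=
  (C * g2 * exp (- g2 * (s - d)) - b)
    / (g1 * exp (g1 * s) + g2 * exp ((g1 + g2) * d) * exp (- g2 * s))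
    * (exp (g1 * z) - exp ((g1 + g2) * d) * exp (- g2 * z))
  + C * exp (- g2 * (z - d)).
Definition KK g1 g2 b d C s :=
  (C * g2 * exp (- g2 * (s - d)) - b)
    / (g1 * exp (g1 * s) + g2 * exp ((g1 + g2) * d) * exp (- g2 * s)).
Definition Gd1 g1 g2 b d C s z :=
  KK g1 g2 b d C s * (g1*exp (g1 * z) + g2 * exp ((g1 + g2) * d) * exp (- g2 * z))
  - C * g2 * exp (- g2 * (z - d)).
Definition Gd2 g1 g2 b d C s z :=
  KK g1 g2 b d C s * (g1^2*exp (g1 * z) - g2^2 * exp ((g1 + g2) * d) * exp (- g2 * z))
  + C * g2^2 * exp (- g2 * (z - d)).
Definition Gd3 g1 g2 b d C s z :=
  KK g1 g2 b d C s * (g1^3*exp (g1 * z) + g2^3 * exp ((g1 + g2) * d) * exp (- g2 * z))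
  - C * g2^3 * exp (- g2 * (z - d)).

Lemma Ffun_Fa mu sigma u0 r beta s z : Ffun mu sigma u0 r beta s z =
  Fa (theta1 mu sigma r u0) (theta2 mu sigma r u0) beta u0 r s z.
Proof. reflexivity. Qed.
Lemma Gfun_Ga mu sigma r beta d C s z : Gfun mu sigma r beta d C s z =
  Ga (theta1 mu sigma r 0) (theta2 mu sigma r 0) beta d C s z.
Proof. reflexivity. Qed.

Lemma Fa_der a1 a2 b u0 r s z : a1 <> 0 -> a2 <> 0 -> exp(a1*s)-exp(-a2*s) <> 0 ->
  derivable_pt_lim (Fa a1 a2 b u0 r s) z (Fd1 a1 a2 b s z).
Proof. intros. apply is_derive_Reals. unfold Fa, Fd1. auto_derive. auto. field; auto. Qed.
Lemma Fd1_der a1 a2 b s z : exp(a1*s)-exp(-a2*s) <> 0 ->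
  derivable_pt_lim (Fd1 a1 a2 b s) z (Fd2 a1 a2 b s z).
Proof. intros. apply is_derive_Reals. unfold Fd1, Fd2. auto_derive. auto. field; auto. Qed.
Lemma Fd2_der a1 a2 b s z : exp(a1*s)-exp(-a2*s) <> 0 ->
  derivable_pt_lim (Fd2 a1 a2 b s) z (Fd3 a1 a2 b s z).
Proof. intros. apply is_derive_Reals. unfold Fd2, Fd3. auto_derive. auto. field; auto. Qed.
Lemma Ga_der g1 g2 b d C s z :
  derivable_pt_lim (Ga g1 g2 b d C s) z (Gd1 g1 g2 b d C s z).
Proof. apply is_derive_Reals. unfold Ga, Gd1, KK. auto_derive. auto. unfold Rminus. ring. Qed.
Lemma Gd1_der g1 g2 b d C s z :
  derivable_pt_lim (Gd1 g1 g2 b d C s) z (Gd2 g1 g2 b d C s z).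
Proof. apply is_derive_Reals. unfold Gd1, Gd2. auto_derive. auto. unfold Rminus. ring. Qed.
Lemma Gd2_der g1 g2 b d C s z :
  derivable_pt_lim (Gd2 g1 g2 b d C s) z (Gd3 g1 g2 b d C s z).
Proof. apply is_derive_Reals. unfold Gd2, Gd3. auto_derive. auto. unfold Rminus. ring. Qed.
Definition pw (F G : R -> R) s z := if Rle_dec z s then F z else G z.

Lemma pw_der (F G F' G' : R -> R) s :
  (forall x, derivable_pt_lim F x (F' x)) -> (forall x, derivable_pt_lim G x (G' x)) ->
  F s = G s -> F' s = G' s ->
  forall x, derivable_pt_lim (pw F G s) x (pw F' G' s x).
Proof.
  intros HF HG H0 H1 x. unfold pw.
  destruct (Rtotal_order x s) as [Hlt|[Heq|Hgt]].
  - intros eps Heps. destruct (HF x eps Heps) as [del Hd].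
    assert (Hp : 0 < Rmin del (s - x)) by (apply Rmin_pos; [apply cond_pos|lra]).
    exists (mkposreal _ Hp). intros h Hh0 Hh. simpl in Hh.
    assert (Hh1 : Rabs h < del) by (eapply Rlt_le_trans; [apply Hh|apply Rmin_l]).
    assert (Hh2 : Rabs h < s - x) by (eapply Rlt_le_trans; [apply Hh|apply Rmin_r]).
    destruct (Rle_dec x s); [|lra].
    destruct (Rle_dec (x+h) s) as [_|Hn].
    + apply Hd; auto.
    + exfalso. apply Hn. apply Rabs_def2 in Hh2. lra.
  - subst x. intros eps Heps. destruct (HF s eps Heps) as [del1 Hd1].
    destruct (HG s eps Heps) as [del2 Hd2].
    assert (Hp : 0 < Rmin del1 del2) by (apply Rmin_pos; apply cond_pos).
    exists (mkposreal _ Hp). intros h Hh0 Hh. simpl in Hh.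
    assert (Hh1 : Rabs h < del1) by (eapply Rlt_le_trans; [apply Hh|apply Rmin_l]).
    assert (Hh2 : Rabs h < del2) by (eapply Rlt_le_trans; [apply Hh|apply Rmin_r]).
    destruct (Rle_dec s s) as [_|Hn]; [|lra].
    destruct (Rle_dec (s+h) s) as [_|Hn].
    + apply Hd1; auto.
    + rewrite H0, H1. apply Hd2; auto.
  - intros eps Heps. destruct (HG x eps Heps) as [del Hd].
    assert (Hp : 0 < Rmin del (x - s)) by (apply Rmin_pos; [apply cond_pos|lra]).
    exists (mkposreal _ Hp). intros h Hh0 Hh. simpl in Hh.
    assert (Hh1 : Rabs h < del) by (eapply Rlt_le_trans; [apply Hh|apply Rmin_l]).
    assert (Hh2 : Rabs h < x - s) by (eapply Rlt_le_trans; [apply Hh|apply Rmin_r]).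
    destruct (Rle_dec x s); [lra|].
    destruct (Rle_dec (x+h) s) as [Hn|_].
    + exfalso. apply Rabs_def2 in Hh2. lra.
    + apply Hd; auto.
Qed.

Definition ctn (f : R -> R) x := forall eps, 0 < eps -> exists delta, 0 < delta /\
  forall y, Rabs (y - x) < delta -> Rabs (f y - f x) < eps.

Lemma der_ctn f x l : derivable_pt_lim f x l -> ctn f x.
Proof.
  intros H. assert (Hc : continuity_pt f x).
  { apply derivable_continuous_pt. exists l. exact H. }
  intros eps Heps. destruct (Hc eps Heps) as [alp [Ha Hb]].
  exists alp. split; auto. intros y Hy.
  destruct (Req_dec y x) as [->|Hne].
  - unfold Rminus. rewrite Rplus_opp_r, Rabs_R0. auto.
  - apply (Hb y). split. split. exact I. auto. exact Hy.
Qed.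

Lemma pw_ctn (F G : R -> R) s :
  (forall x, ctn F x) -> (forall x, ctn G x) -> F s = G s ->
  forall x, ctn (pw F G s) x.
Proof.
  intros HF HG H0 x. unfold pw.
  destruct (Rtotal_order x s) as [Hlt|[Heq|Hgt]].
  - intros eps Heps. destruct (HF x eps Heps) as [del [Hd0 Hd]].
    exists (Rmin del (s - x)). split. apply Rmin_pos; lra. intros y Hy.
    assert (Hh1 : Rabs (y-x) < del) by (eapply Rlt_le_trans; [apply Hy|apply Rmin_l]).
    assert (Hh2 : Rabs (y-x) < s - x) by (eapply Rlt_le_trans; [apply Hy|apply Rmin_r]).
    destruct (Rle_dec x s); [|lra].
    destruct (Rle_dec y s) as [_|Hn].
    + apply Hd; auto.
    + exfalso. apply Hn. apply Rabs_def2 in Hh2. lra.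
  - subst x. intros eps Heps. destruct (HF s eps Heps) as [del1 [Hd10 Hd1]].
    destruct (HG s eps Heps) as [del2 [Hd20 Hd2]].
    exists (Rmin del1 del2). split. apply Rmin_pos; lra. intros y Hy.
    assert (Hh1 : Rabs (y-s) < del1) by (eapply Rlt_le_trans; [apply Hy|apply Rmin_l]).
    assert (Hh2 : Rabs (y-s) < del2) by (eapply Rlt_le_trans; [apply Hy|apply Rmin_r]).
    destruct (Rle_dec s s) as [_|Hn]; [|lra].
    destruct (Rle_dec y s) as [_|Hn].
    + apply Hd1; auto.
    + rewrite H0. apply Hd2; auto.
  - intros eps Heps. destruct (HG x eps Heps) as [del [Hd0 Hd]].
    exists (Rmin del (x - s)). split. apply Rmin_pos; lra. intros y Hy.
    assert (Hh1 : Rabs (y-x) < del) by (eapply Rlt_le_trans; [apply Hy|apply Rmin_l]).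
    assert (Hh2 : Rabs (y-x) < x - s) by (eapply Rlt_le_trans; [apply Hy|apply Rmin_r]).
    destruct (Rle_dec x s); [lra|].
    destruct (Rle_dec y s) as [Hn|_].
    + exfalso. apply Rabs_def2 in Hh2. lra.
    + apply Hd; auto.
Qed.

Lemma der_on a b f f' : (forall x, derivable_pt_lim f x (f' x)) -> has_deriv_on a b f f'.
Proof.
  intros H x Hx eps Heps. destruct (H x eps Heps) as [del Hd].
  exists del. split. apply cond_pos. intros y Hy Hne Hyx.
  replace y with (x + (y - x)) at 1 by ring.
  apply Hd. lra. exact Hyx.
Qed.

Lemma ctn_on a b f : (forall x, ctn f x) -> cont_on a b f.
Proof.
  intros H x Hx eps Heps. destruct (H x eps Heps) as [del [Hd0 Hd]].
  exists del. split; auto.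
Qed.

Lemma ctn_pt f x : ctn f x -> continuity_pt f x.
Proof.
  intros H eps Heps. destruct (H eps Heps) as [del [Hd0 Hd]].
  exists del. split; auto. intros y [_ Hy]. apply Hd. exact Hy.
Qed.

Lemma exp_le x y : x <= y -> exp x <= exp y.
Proof. intros [H|H]. left; apply exp_increasing; auto. subst; lra. Qed.

Lemma Mpos a1 a2 s : 0 < a1 -> 0 < a2 -> 0 < s -> 0 < exp(a1*s) - exp(-a2*s).
Proof. intros. assert (exp(-a2*s) < exp(a1*s)) by (apply exp_increasing; nra). lra. Qed.

Lemma solve_r a1 a2 r sigma : 0 < sigma -> a1 * a2 = 2 * r / sigma ^ 2 -> r = sigma^2*a1*a2/2.
Proof. intros Hs Hp. replace (sigma^2*a1*a2/2) with (sigma^2*(a1*a2)/2) by field. rewrite Hp. field. lra. Qed.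

Lemma solve_d a1 a2 m sigma : 0 < sigma -> a1 - a2 = 2 * m / sigma ^ 2 -> m = sigma^2*(a1-a2)/2.
Proof. intros Hs Hp. rewrite Hp. field. lra. Qed.

Lemma ODE_F a1 a2 mu sigma u0 r b s z : 0 < sigma -> 0 < a1 -> 0 < a2 ->
  a1 * a2 = 2 * r / sigma ^ 2 -> a1 - a2 = 2 * (mu - u0) / sigma ^ 2 ->
  exp(a1*s) - exp(-a2*s) <> 0 ->
  - r * Fa a1 a2 b u0 r s z - mu * Fd1 a1 a2 b s z + sigma ^ 2 / 2 * Fd2 a1 a2 b s z
  + (b + Fd1 a1 a2 b s z) * u0 = 0.
Proof.
  intros Hs Ha1 Ha2 Hp Hd HM.
  pose proof (solve_r _ _ _ _ Hs Hp) as Hr.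
  pose proof (solve_d _ _ _ _ Hs Hd) as Hmu.
  assert (Hmu' : mu = u0 + sigma^2*(a1-a2)/2) by lra.
  clear Hp Hd Hmu. subst r mu. unfold Fa, Fd1, Fd2. field. repeat split; try lra.
Qed.

Lemma ODE_G g1 g2 mu sigma r b d C s z : 0 < sigma -> 0 < g1 -> 0 < g2 ->
  g1 * g2 = 2 * r / sigma ^ 2 -> g1 - g2 = 2 * mu / sigma ^ 2 ->
  - r * Ga g1 g2 b d C s z - mu * Gd1 g1 g2 b d C s z + sigma ^ 2 / 2 * Gd2 g1 g2 b d C s z = 0.
Proof.
  intros Hs Ha1 Ha2 Hp Hd.
  pose proof (solve_r _ _ _ _ Hs Hp) as Hr.
  pose proof (solve_d _ _ _ _ Hs Hd) as Hmu.
  clear Hp Hd. subst r mu. unfold Ga, Gd1, Gd2, KK. unfold Rminus, Rdiv. ring.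
Qed.

Lemma Fd1_s a1 a2 b s : exp(a1*s) - exp(-a2*s) <> 0 -> Fd1 a1 a2 b s s = - b.
Proof. intros. unfold Fd1. field. auto. Qed.

Lemma Fd1_0 a1 a2 b s : Fd1 a1 a2 b s 0 = 0.
Proof. unfold Fd1. rewrite !Rmult_0_r. unfold Rminus. rewrite Rplus_opp_r. unfold Rdiv. ring. Qed.

Lemma Dpos g1 g2 d s : 0 < g1 -> 0 < g2 ->
  0 < g1 * exp (g1 * s) + g2 * exp ((g1 + g2) * d) * exp (- g2 * s).
Proof. intros. pose proof (exp_pos (g1*s)). pose proof (exp_pos ((g1+g2)*d)).
  pose proof (exp_pos (-g2*s)). assert (0 < g2 * exp ((g1 + g2) * d) * exp (- g2 * s)).
  apply Rmult_lt_0_compat; auto; apply Rmult_lt_0_compat; auto. nra. Qed.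

Lemma Gd1_s g1 g2 b d C s : 0 < g1 -> 0 < g2 -> Gd1 g1 g2 b d C s s = - b.
Proof. intros. pose proof (Dpos g1 g2 d s H H0). unfold Gd1, KK.
  field. lra. Qed.

Lemma Ga_d g1 g2 b d C s : Ga g1 g2 b d C s d = C.
Proof. unfold Ga. rewrite <- exp_plus.
  replace ((g1 + g2) * d + - g2 * d) with (g1*d) by ring.
  replace (- g2 * (d - d)) with 0 by ring. rewrite exp_0. ring. Qed.

Definition cc g1 g2 t := (g1*exp(-g2*t) + g2*exp(g1*t))/(g1+g2).
Definition kk g1 g2 t := (exp(g1*t) - exp(-g2*t))/(g1+g2).
Definition kd g1 g2 t := (g1*exp(g1*t) + g2*exp(-g2*t))/(g1+g2).
Definition phi a1 a2 s := (exp(a1*s) + a1/a2*exp(-a2*s))/(a1*(exp(a1*s)-exp(-a2*s))).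
Definition lam a1 a2 s := (a1*exp(a1*s) + a2*exp(-a2*s))/(exp(a1*s)-exp(-a2*s)).
Definition Psi a1 a2 g1 g2 b u0 r d s :=
  Fa a1 a2 b u0 r s s * cc g1 g2 (d - s) - b * kk g1 g2 (d - s).
Definition Psid a1 a2 g1 g2 b u0 r d s :=
  (-b + b*phi a1 a2 s*lam a1 a2 s) * cc g1 g2 (d-s)
  - Fa a1 a2 b u0 r s s * (g1*g2*kk g1 g2 (d-s)) + b*kd g1 g2 (d-s).

Lemma Psi_der a1 a2 g1 g2 b u0 r d s : 0 < a1 -> 0 < a2 -> 0 < g1 -> 0 < g2 -> 0 < r -> 0 < s ->
  derivable_pt_lim (Psi a1 a2 g1 g2 b u0 r d) s (Psid a1 a2 g1 g2 b u0 r d s).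
Proof.
  intros Ha1 Ha2 Hg1 Hg2 Hr Hs. pose proof (Mpos a1 a2 s Ha1 Ha2 Hs).
  apply is_derive_Reals. unfold Psi, Psid, Fa, cc, kk, kd, phi, lam.
  auto_derive.
  - repeat split; try lra; apply Rmult_integral_contrapositive_currified; lra.
  - unfold Rminus. field. repeat split; lra.
Qed.

Lemma Psid_eq a1 a2 g1 g2 mu sigma b u0 r d s : 0 < sigma -> 0 < a1 -> 0 < a2 ->
  0 < g1 -> 0 < g2 -> 0 < s ->
  a1 * a2 = 2 * r / sigma ^ 2 -> a1 - a2 = 2 * (mu - u0) / sigma ^ 2 ->
  g1 * g2 = 2 * r / sigma ^ 2 -> g1 - g2 = 2 * mu / sigma ^ 2 ->
  Psid a1 a2 g1 g2 b u0 r d s =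
  b*phi a1 a2 s*lam a1 a2 s*cc g1 g2 (d-s) + b*lam a1 a2 s*kk g1 g2 (d-s).
Proof.
  intros Hs Ha1 Ha2 Hg1 Hg2 Hs0 Hap Had Hgp Hgd.
  pose proof (Mpos a1 a2 s Ha1 Ha2 Hs0) as HM.
  assert (E1 : kd g1 g2 (d-s) = cc g1 g2 (d-s) + (g1-g2)*kk g1 g2 (d-s)).
  { unfold kd, cc, kk. field. lra. }
  assert (E2 : b*(g1-g2) - g1*g2*Fa a1 a2 b u0 r s s = b*lam a1 a2 s).
  { rewrite Hgd, Hgp. clear Hgd Hgp.
    pose proof (solve_r _ _ _ _ Hs Hap) as Hr.
    pose proof (solve_d _ _ _ _ Hs Had) as Hmu.
    assert (Hmu' : mu = u0 + sigma^2*(a1-a2)/2) by lra.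
    clear Hap Had Hmu. subst r mu. unfold Fa, lam. field. repeat split; lra. }
  transitivity (b*phi a1 a2 s*lam a1 a2 s*cc g1 g2 (d-s)
     + kk g1 g2 (d-s) * (b*(g1-g2) - g1*g2*Fa a1 a2 b u0 r s s)).
  - unfold Psid. rewrite E1. ring.
  - rewrite E2. ring.
Qed.

Lemma Psid_pos a1 a2 g1 g2 mu sigma b u0 r d s : 0 < sigma -> 0 < a1 -> 0 < a2 ->
  0 < g1 -> 0 < g2 -> 0 < b -> 0 < s -> s <= d ->
  a1 * a2 = 2 * r / sigma ^ 2 -> a1 - a2 = 2 * (mu - u0) / sigma ^ 2 ->
  g1 * g2 = 2 * r / sigma ^ 2 -> g1 - g2 = 2 * mu / sigma ^ 2 ->
  0 < Psid a1 a2 g1 g2 b u0 r d s.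
Proof.
  intros Hs Ha1 Ha2 Hg1 Hg2 Hb Hs0 Hsd Hap Had Hgp Hgd.
  rewrite (Psid_eq a1 a2 g1 g2 mu sigma) by auto.
  pose proof (Mpos a1 a2 s Ha1 Ha2 Hs0) as HM.
  pose proof (exp_pos (a1*s)). pose proof (exp_pos (-a2*s)).
  assert (Hphi : 0 < phi a1 a2 s).
  { unfold phi. apply Rdiv_lt_0_compat. assert (0 < a1/a2*exp(-a2*s)).
    apply Rmult_lt_0_compat; auto. apply Rdiv_lt_0_compat; auto. lra.
    apply Rmult_lt_0_compat; auto. }
  assert (Hlam : 0 < lam a1 a2 s).
  { unfold lam. apply Rdiv_lt_0_compat; auto. nra. }
  assert (Hcc : 0 < cc g1 g2 (d-s)).
  { unfold cc. apply Rdiv_lt_0_compat; [|lra].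
    pose proof (exp_pos (-g2*(d-s))). pose proof (exp_pos (g1*(d-s))). nra. }
  assert (Hkk : 0 <= kk g1 g2 (d-s)).
  { unfold kk, Rdiv. apply Rmult_le_pos; [|left; apply Rinv_0_lt_compat; lra].
    assert (exp(-g2*(d-s)) <= exp(g1*(d-s))) by (apply exp_le; nra). lra. }
  assert (0 < b * phi a1 a2 s * lam a1 a2 s * cc g1 g2 (d - s)).
  { apply Rmult_lt_0_compat; auto. apply Rmult_lt_0_compat; auto. apply Rmult_lt_0_compat; auto. }
  assert (0 <= b * lam a1 a2 s * kk g1 g2 (d - s)).
  { apply Rmult_le_pos; auto. left; apply Rmult_lt_0_compat; auto. }
  lra.
Qed.

Lemma Psi_incr a1 a2 g1 g2 mu sigma b u0 r d x y : 0 < sigma -> 0 < a1 -> 0 < a2 ->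
  0 < g1 -> 0 < g2 -> 0 < b -> 0 < r -> 0 < x -> x < y -> y <= d ->
  a1 * a2 = 2 * r / sigma ^ 2 -> a1 - a2 = 2 * (mu - u0) / sigma ^ 2 ->
  g1 * g2 = 2 * r / sigma ^ 2 -> g1 - g2 = 2 * mu / sigma ^ 2 ->
  Psi a1 a2 g1 g2 b u0 r d x < Psi a1 a2 g1 g2 b u0 r d y.
Proof.
  intros Hs Ha1 Ha2 Hg1 Hg2 Hb Hr Hx Hxy Hyd Hap Had Hgp Hgd.
  destruct (MVT_cor2 (Psi a1 a2 g1 g2 b u0 r d) (Psid a1 a2 g1 g2 b u0 r d) x y Hxy)
    as [c [Hc1 Hc2]].
  { intros c Hc. apply Psi_der; auto; lra. }
  assert (0 < Psid a1 a2 g1 g2 b u0 r d c) by (apply (Psid_pos a1 a2 g1 g2 mu sigma); auto; lra).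
  assert (0 < Psid a1 a2 g1 g2 b u0 r d c * (y - x)) by (apply Rmult_lt_0_compat; lra).
  lra.
Qed.

Lemma key_identity a1 a2 g1 g2 b u0 r d C s : 0 < g1 -> 0 < g2 ->
  Ga g1 g2 b d C s s - Fa a1 a2 b u0 r s s =
  (C - Psi a1 a2 g1 g2 b u0 r d s) *
  (exp(-g2*(s-d))*(g1+g2)*exp(g1*s)/(g1*exp(g1*s) + g2*exp((g1+g2)*d)*exp(-g2*s))).
Proof.
  intros Hg1 Hg2. pose proof (Dpos g1 g2 d s Hg1 Hg2) as HD.
  unfold Ga, Psi, cc, kk.
  set (V := Fa a1 a2 b u0 r s s).
  replace (-g2*(s-d)) with (-g2*s + g2*d) by ring.
  replace ((g1+g2)*d) with (g1*d + g2*d) by ring.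
  replace (-g2*(d-s)) with (-(g2*d + -g2*s)) by ring.
  replace (g1*(d-s)) with (g1*d + -(g1*s)) by ring.
  rewrite !exp_plus in *. rewrite !exp_Ropp, !exp_plus.
  pose proof (exp_pos (g1*s)). pose proof (exp_pos (-g2*s)).
  pose proof (exp_pos (g1*d)). pose proof (exp_pos (g2*d)).
  field. repeat split; try lra.
  assert (0 < g2 * (exp (g1 * d) * exp (g2 * d)) * exp (- g2 * s)) by (repeat apply Rmult_lt_0_compat; auto). nra.
Qed.

Lemma iffC a1 a2 g1 g2 b u0 r d C s : 0 < g1 -> 0 < g2 ->
  (Fa a1 a2 b u0 r s s = Ga g1 g2 b d C s s <-> C = Psi a1 a2 g1 g2 b u0 r d s).
Proof.
  intros Hg1 Hg2. pose proof (key_identity a1 a2 g1 g2 b u0 r d C s Hg1 Hg2) as K.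
  pose proof (Dpos g1 g2 d s Hg1 Hg2) as HD.
  assert (HB : 0 < exp(-g2*(s-d))*(g1+g2)*exp(g1*s)/(g1*exp(g1*s) + g2*exp((g1+g2)*d)*exp(-g2*s))).
  { apply Rdiv_lt_0_compat; auto. apply Rmult_lt_0_compat. apply Rmult_lt_0_compat.
    apply exp_pos. lra. apply exp_pos. }
  split; intro H.
  - set (B := exp(-g2*(s-d))*(g1+g2)*exp(g1*s)/(g1*exp(g1*s) + g2*exp((g1+g2)*d)*exp(-g2*s))) in *.
    assert (K2 : (C - Psi a1 a2 g1 g2 b u0 r d s) * B = 0) by (rewrite <- K; lra).
    apply Rmult_integral in K2. destruct K2 as [K2|K2]; lra.
  - set (B := exp(-g2*(s-d))*(g1+g2)*exp(g1*s)/(g1*exp(g1*s) + g2*exp((g1+g2)*d)*exp(-g2*s))) in *.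
    assert (K2 : (C - Psi a1 a2 g1 g2 b u0 r d s) * B = 0) by (rewrite H; ring).
    lra.
Qed.

Lemma Psi_d a1 a2 g1 g2 b u0 r d : 0 < g1 -> 0 < g2 ->
  Psi a1 a2 g1 g2 b u0 r d d = Fa a1 a2 b u0 r d d.
Proof. intros. unfold Psi, cc, kk. replace (d-d) with 0 by ring. rewrite !Rmult_0_r, exp_0.
  field. lra. Qed.

Lemma wsign g1 g2 p q s z : 0 < g1 -> 0 < g2 -> s <= z ->
  p*exp(g1*s) + q*exp(-g2*s) <= 0 ->
  g1*p*exp(g1*s) - g2*q*exp(-g2*s) < 0 ->
  p*exp(g1*z) + q*exp(-g2*z) <= p*exp(g1*s) + q*exp(-g2*s).
Proof.
  intros Hg1 Hg2 Hsz H1 H2.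
  replace (g1*z) with (g1*s + g1*(z-s)) by ring.
  replace (-g2*z) with (-g2*s + -g2*(z-s)) by ring.
  rewrite !exp_plus.
  set (P := p*exp(g1*s)) in *. set (Q := q*exp(-g2*s)) in *.
  set (t := z - s) in *.
  assert (Ht : 0 <= t) by (unfold t; lra).
  pose proof (exp_ineq1_le (g1*t)) as HX. pose proof (exp_ineq1_le (-g2*t)) as HY.
  assert (HY1 : exp(-g2*t) <= 1) by (rewrite <- exp_0; apply exp_le; nra).
  set (X := exp(g1*t)) in *. set (Y := exp(-g2*t)) in *.
  replace (p * (exp (g1 * s) * X) + q * (exp (- g2 * s) * Y)) with (P*X + Q*Y) by (unfold P, Q; ring).
  replace (g1 * p * exp (g1 * s) - g2 * q * exp (- g2 * s)) with (g1*P - g2*Q) in H2 by (unfold P, Q; ring).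
  destruct (Rle_dec P 0) as [HP|HP].
  - destruct (Rle_dec 0 Q) as [HQ|HQ].
    + assert (P*(X-1) <= 0) by (apply Rmult_le_0_r; nra). nra.
    + assert (g1*P*(X-1) <= g2*Q*(X-1)) by (apply Rmult_le_compat_r; nra).
      assert (g2*(X-1) >= g1*(1-Y)) by nra.
      assert (g1*(P*X + Q*Y - (P+Q)) <= 0) by nra.
      nra.
  - assert (0 < Q) by nra. lra.
Qed.

Lemma Gd1_form g1 g2 b d C s z : Gd1 g1 g2 b d C s z =
  (KK g1 g2 b d C s*g1)*exp(g1*z) +
  (KK g1 g2 b d C s*g2*exp((g1+g2)*d) - C*g2*exp(g2*d))*exp(-g2*z).
Proof. unfold Gd1. replace (-g2*(z-d)) with (-g2*z + g2*d) by ring. rewrite exp_plus. ring. Qed.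

Lemma Gd2_form g1 g2 b d C s z : Gd2 g1 g2 b d C s z =
  g1*(KK g1 g2 b d C s*g1)*exp(g1*z) -
  g2*(KK g1 g2 b d C s*g2*exp((g1+g2)*d) - C*g2*exp(g2*d))*exp(-g2*z).
Proof. unfold Gd2. replace (-g2*(z-d)) with (-g2*z + g2*d) by ring. rewrite exp_plus. ring. Qed.

Lemma G_sign g1 g2 b d C s z : 0 < g1 -> 0 < g2 -> 0 < b -> s <= z ->
  Gd2 g1 g2 b d C s s < 0 -> b + Gd1 g1 g2 b d C s z <= 0.
Proof.
  intros Hg1 Hg2 Hb Hsz H2.
  pose proof (Gd1_s g1 g2 b d C s Hg1 Hg2) as H1.
  rewrite Gd1_form in H1 |- *. rewrite Gd2_form in H2.
  pose proof (wsign g1 g2 (KK g1 g2 b d C s*g1)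
    (KK g1 g2 b d C s*g2*exp((g1+g2)*d) - C*g2*exp(g2*d)) s z Hg1 Hg2 Hsz) as W.
  rewrite H1 in W. assert (- b <= 0) by lra.
  assert (H3 : g1 * (KK g1 g2 b d C s * g1) * exp (g1 * s) -
     g2 * (KK g1 g2 b d C s * g2 * exp ((g1 + g2) * d) - C * g2 * exp (g2 * d)) * exp (- g2 * s) < 0) by exact H2.
  specialize (W H H3). lra.
Qed.

Lemma F_sign a1 a2 b s z : 0 < a1 -> 0 < a2 -> 0 < b -> 0 < s -> 0 <= z <= s ->
  0 <= b + Fd1 a1 a2 b s z.
Proof.
  intros Ha1 Ha2 Hb Hs Hz. pose proof (Mpos a1 a2 s Ha1 Ha2 Hs) as HM.
  assert (E1 : exp(a1*z) <= exp(a1*s)) by (apply exp_le; nra).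
  assert (E2 : exp(-a2*s) <= exp(-a2*z)) by (apply exp_le; nra).
  replace (b + Fd1 a1 a2 b s z) with
    (b * ((exp(a1*s) - exp(-a2*s)) - (exp(a1*z) - exp(-a2*z))) * / (exp(a1*s) - exp(-a2*s)))
    by (unfold Fd1; field; lra).
  apply Rmult_le_pos. apply Rmult_le_pos; lra. left; apply Rinv_0_lt_compat; lra.
Qed.

Lemma Fd2_neg a1 a2 b s : 0 < a1 -> 0 < a2 -> 0 < b -> 0 < s -> Fd2 a1 a2 b s s < 0.
Proof.
  intros Ha1 Ha2 Hb Hs. pose proof (Mpos a1 a2 s Ha1 Ha2 Hs) as HM.
  pose proof (exp_pos (a1*s)). pose proof (exp_pos (-a2*s)).
  unfold Fd2, Rdiv. assert (0 < a1 * exp (a1 * s) + a2 * exp (- a2 * s)) by nra.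
  assert (0 < / (exp (a1 * s) - exp (- a2 * s))) by (apply Rinv_0_lt_compat; lra).
  assert (0 < b * (a1 * exp (a1 * s) + a2 * exp (- a2 * s)) * / (exp (a1 * s) - exp (- a2 * s))).
  { apply Rmult_lt_0_compat; auto. apply Rmult_lt_0_compat; auto. }
  lra.
Qed.

Lemma lub_pos v u0 : 0 < u0 -> 0 <= v ->
  is_lub (fun y => exists u, 0 <= u <= u0 /\ y = v * u) (v * u0).
Proof.
  intros Hu Hv. split.
  - intros y [u [Hu1 ->]]. apply Rmult_le_compat_l; lra.
  - intros B HB. apply HB. exists u0. split; [lra|auto].
Qed.

Lemma lub_neg v u0 : 0 < u0 -> v <= 0 ->
  is_lub (fun y => exists u, 0 <= u <= u0 /\ y = v * u) 0.
Proof.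
  intros Hu Hv. split.
  - intros y [u [Hu1 ->]]. nra.
  - intros B HB. apply HB. exists 0. split; [lra|ring].
Qed.

Lemma jump f f1 (G : R -> R) d x : has_deriv_on 0 d f f1 -> 0 <= x < d -> ctn G x ->
  (forall y, x < y -> f y = G y) -> f x = G x.
Proof.
  intros Hd Hx HG Hfy.
  destruct (Req_dec (f x) (G x)) as [|Hne]; auto. exfalso.
  set (e := Rabs (G x - f x)).
  assert (He : 0 < e) by (apply Rabs_pos_lt; lra).
  destruct (Hd x ltac:(lra) 1 Rlt_0_1) as [d1 [Hd1 H1]].
  destruct (HG (e/2) ltac:(lra)) as [d2 [Hd2 H2]].
  set (A := Rabs (f1 x)).
  assert (HA : 0 <= A) by apply Rabs_pos.
  set (h := Rmin (Rmin d1 d2) (Rmin (d - x) (e / (2 * (A + 1)))) / 2).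
  assert (Hm1 : Rmin (Rmin d1 d2) (Rmin (d - x) (e / (2 * (A + 1)))) <= Rmin d1 d2) by apply Rmin_l.
  assert (Hm2 : Rmin (Rmin d1 d2) (Rmin (d - x) (e / (2 * (A + 1)))) <= Rmin (d - x) (e / (2 * (A + 1)))) by apply Rmin_r.
  pose proof (Rmin_l d1 d2). pose proof (Rmin_r d1 d2).
  pose proof (Rmin_l (d - x) (e / (2 * (A + 1)))). pose proof (Rmin_r (d - x) (e / (2 * (A + 1)))).
  assert (Hpos : 0 < Rmin (Rmin d1 d2) (Rmin (d - x) (e / (2 * (A + 1))))).
  { apply Rmin_pos; apply Rmin_pos; try lra. apply Rdiv_lt_0_compat; lra. }
  assert (Hh : 0 < h) by (unfold h; lra).
  assert (Hhe : h * (2 * (A + 1)) <= e / 2).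
  { assert (h <= e / (2 * (A + 1)) / 2) by (unfold h; lra).
    assert (Hx5 : h * (2 * (A + 1)) <= e / (2 * (A + 1)) / 2 * (2 * (A + 1))) by (apply Rmult_le_compat_r; lra).
    replace (e / (2 * (A + 1)) / 2 * (2 * (A + 1))) with (e/2) in Hx5 by (field; lra). lra. }
  assert (Hrange : 0 <= x + h <= d) by (unfold h in *; lra).
  specialize (H1 (x + h) Hrange ltac:(lra)).
  replace (x + h - x) with h in H1 by ring.
  assert (Hab : Rabs h < d1) by (rewrite Rabs_pos_eq; unfold h in *; lra).
  specialize (H1 Hab).
  specialize (H2 (x + h)). replace (x + h - x) with h in H2 by ring.
  assert (Hab2 : Rabs h < d2) by (rewrite Rabs_pos_eq; unfold h in *; lra).
  specialize (H2 Hab2).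
  rewrite <- (Hfy (x + h)) in H2 by lra.
  set (q := (f (x + h) - f x) / h) in H1.
  assert (Hq : f (x + h) - f x = q * h) by (unfold q; field; lra).
  apply Rabs_def2 in H1. apply Rabs_def2 in H2.
  pose proof (Rle_abs (f1 x)) as Ha8. pose proof (Rabs_maj2 (f1 x)) as Ha9. fold A in Ha8, Ha9.
  assert (Hq2 : Rabs (q * h) <= (A + 1) * h).
  { rewrite Rabs_mult, (Rabs_pos_eq h) by lra. apply Rmult_le_compat_r; [lra|].
    apply Rabs_le. lra. }
  rewrite <- Hq in Hq2. pose proof (Rle_abs (f (x + h) - f x)). pose proof (Rabs_maj2 (f (x + h) - f x)).
  assert (Hee : e = G x - f x \/ e = - (G x - f x)).
  { unfold e. destruct (Rcase_abs (G x - f x)) as [Hc|Hc].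
    right. apply Rabs_left; lra. left. apply Rabs_right; lra. }
  destruct Hee as [Hee|Hee]; lra.
Qed.

Lemma Fa_phi a1 a2 b u0 r s : 0 < a1 -> 0 < a2 -> 0 < r -> 0 < s ->
  Fa a1 a2 b u0 r s s = b*u0/r - b*phi a1 a2 s.
Proof. intros. pose proof (Mpos a1 a2 s H H0 H2). unfold Fa, phi. field. lra. Qed.

Lemma phi_lb a1 a2 s : 0 < a1 -> 0 < a2 -> 0 < s -> (a1+a2)*s <= 1/2 ->
  1/(2*a1*a2*s) <= phi a1 a2 s.
Proof.
  intros Ha1 Ha2 Hs Hx.
  pose proof (Mpos a1 a2 s Ha1 Ha2 Hs) as HM.
  assert (HB : exp(-a2*s) = exp(a1*s) * exp(-((a1+a2)*s))).
  { rewrite <- exp_plus. f_equal. ring. }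
  set (x := (a1+a2)*s) in *.
  assert (Hx0 : 0 < x) by (unfold x; nra).
  pose proof (exp_ineq1_le (-x)) as HE.
  set (E := exp(-x)) in *. set (A := exp(a1*s)) in *.
  assert (HA : 0 < A) by apply exp_pos.
  unfold phi. fold A. rewrite HB. rewrite HB in HM.
  assert (HK : 0 < 2*a1*a2*s) by (repeat apply Rmult_lt_0_compat; lra).
  assert (HD : 0 < a1 * (A - A*E)) by (apply Rmult_lt_0_compat; lra).
  assert (Heq : (A + a1/a2*(A*E))/(a1*(A - A*E)) - 1/(2*a1*a2*s) =
     (2*a1*a2*s*(A + a1/a2*(A*E)) - a1*(A - A*E)) * / (a1*(A - A*E)*(2*a1*a2*s))).
  { field. repeat split; lra. }
  assert (Hnum : 0 <= 2*a1*a2*s*(A + a1/a2*(A*E)) - a1*(A - A*E)).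
  { replace (2*a1*a2*s*(A + a1/a2*(A*E)) - a1*(A - A*E)) with
      (a1*A*(2*a2*s + 2*a1*s*E - 1 + E)) by (field; lra).
    apply Rmult_le_pos. nra.
    assert (E >= 1/2) by lra. unfold x in HE. nra. }
  assert (0 <= (2*a1*a2*s*(A + a1/a2*(A*E)) - a1*(A - A*E)) * / (a1*(A - A*E)*(2*a1*a2*s))).
  { apply Rmult_le_pos; auto. left. apply Rinv_0_lt_compat. nra. }
  lra.
Qed.

Lemma exists_low a1 a2 g1 g2 b u0 r d C : 0 < a1 -> 0 < a2 -> 0 < g1 -> 0 < g2 ->
  0 < b -> 0 < u0 -> 0 < r -> 0 < d ->
  exists s0, 0 < s0 < d /\ Psi a1 a2 g1 g2 b u0 r d s0 < C.
Proof.
  intros Ha1 Ha2 Hg1 Hg2 Hb Hu Hr Hd.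
  set (cl := g2/(g1+g2)).
  assert (Hcl : 0 < cl) by (unfold cl; apply Rdiv_lt_0_compat; lra).
  set (Mb := Rmax (u0/r) (u0/r - C/(b*cl)) + 1).
  assert (HMb1 : u0/r + 1 <= Mb) by (unfold Mb; pose proof (Rmax_l (u0/r) (u0/r - C/(b*cl))); lra).
  assert (HMb2 : u0/r - C/(b*cl) + 1 <= Mb) by (unfold Mb; pose proof (Rmax_r (u0/r) (u0/r - C/(b*cl))); lra).
  assert (Hur : 0 < u0/r) by (apply Rdiv_lt_0_compat; lra).
  assert (HMb : 0 < Mb) by lra.
  set (s0 := Rmin (Rmin (d/2) (1/(2*(a1+a2)))) (1/(2*a1*a2*Mb))).
  assert (Hk1 : 0 < 1/(2*(a1+a2))) by (apply Rdiv_lt_0_compat; lra).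
  assert (HK : 0 < 2*a1*a2*Mb) by (repeat apply Rmult_lt_0_compat; lra).
  assert (Hk2 : 0 < 1/(2*a1*a2*Mb)) by (apply Rdiv_lt_0_compat; lra).
  assert (Hs0a : s0 <= d/2) by (unfold s0; pose proof (Rmin_l (Rmin (d/2) (1/(2*(a1+a2)))) (1/(2*a1*a2*Mb))); pose proof (Rmin_l (d/2) (1/(2*(a1+a2)))); lra).
  assert (Hs0b : s0 <= 1/(2*(a1+a2))) by (unfold s0; pose proof (Rmin_l (Rmin (d/2) (1/(2*(a1+a2)))) (1/(2*a1*a2*Mb))); pose proof (Rmin_r (d/2) (1/(2*(a1+a2)))); lra).
  assert (Hs0c : s0 <= 1/(2*a1*a2*Mb)) by (unfold s0; apply Rmin_r).
  assert (Hs0 : 0 < s0) by (unfold s0; repeat apply Rmin_pos; lra).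
  exists s0. split; [lra|].
  assert (Hx : (a1+a2)*s0 <= 1/2).
  { assert ((a1+a2)*s0 <= (a1+a2)*(1/(2*(a1+a2)))) by (apply Rmult_le_compat_l; lra).
    replace ((a1+a2)*(1/(2*(a1+a2)))) with (1/2) in H by (field; lra). lra. }
  pose proof (phi_lb a1 a2 s0 Ha1 Ha2 Hs0 Hx) as Hphi.
  assert (HphiM : Mb <= phi a1 a2 s0).
  { assert (2*a1*a2*s0*Mb <= 1).
    { assert (s0 * (2*a1*a2*Mb) <= 1/(2*a1*a2*Mb) * (2*a1*a2*Mb)) by (apply Rmult_le_compat_r; lra).
      replace (1/(2*a1*a2*Mb) * (2*a1*a2*Mb)) with 1 in H by (field; repeat split; lra). lra. }
    assert (Mb <= 1/(2*a1*a2*s0)).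
    { assert (0 < 2*a1*a2*s0) by (repeat apply Rmult_lt_0_compat; lra).
      apply (Rmult_le_reg_r (2*a1*a2*s0)); auto.
      replace (1/(2*a1*a2*s0) * (2*a1*a2*s0)) with 1 by (field; repeat split; lra). lra. }
    lra. }
  unfold Psi. rewrite Fa_phi by lra.
  assert (Hkk : 0 <= kk g1 g2 (d-s0)).
  { unfold kk, Rdiv. apply Rmult_le_pos; [|left; apply Rinv_0_lt_compat; lra].
    assert (exp(-g2*(d-s0)) <= exp(g1*(d-s0))) by (apply exp_le; nra). lra. }
  assert (Hcc : cl <= cc g1 g2 (d-s0)).
  { unfold cc, cl, Rdiv. apply Rmult_le_compat_r. left; apply Rinv_0_lt_compat; lra.
    pose proof (exp_pos (-g2*(d-s0))).
    assert (1 <= exp(g1*(d-s0))) by (rewrite <- exp_0; apply exp_le; nra). nra. }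
  set (V := b*u0/r - b*phi a1 a2 s0).
  assert (HV : V <= b*(u0/r - Mb)) by (unfold V; unfold Rdiv; nra).
  assert (HV0 : V < 0) by nra.
  assert (V * cc g1 g2 (d-s0) <= V * cl) by nra.
  assert (b * kk g1 g2 (d-s0) >= 0) by nra.
  assert (V * cl <= b*(u0/r - Mb)*cl) by nra.
  assert (b*(u0/r - Mb)*cl <= C - b*cl).
  { assert (b*(u0/r-Mb)*cl <= b*(C/(b*cl) - 1)*cl).
    { apply Rmult_le_compat_r; [lra|]. apply Rmult_le_compat_l; lra. }
    replace (b*(C/(b*cl) - 1)*cl) with (C - b*cl) in H2 by (field; lra). lra. }
  assert (0 < b*cl) by nra.
  lra.
Qed.
Lemma theta_facts mu sigma r u : 0 < sigma -> 0 < r ->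
  0 < theta1 mu sigma r u /\ 0 < theta2 mu sigma r u /\
  theta1 mu sigma r u * theta2 mu sigma r u = 2 * r / sigma ^ 2 /\
  theta1 mu sigma r u - theta2 mu sigma r u = 2 * (mu - u) / sigma ^ 2.
Proof.
  intros Hs Hr. unfold theta1, theta2.
  set (m := mu - u). set (q := sqrt (m ^ 2 + 2 * r * sigma ^ 2)).
  assert (Hs2 : 0 < sigma ^ 2) by (apply pow_lt; lra).
  assert (Hq2 : q * q = m ^ 2 + 2 * r * sigma ^ 2).
  { unfold q. apply sqrt_sqrt. nra. }
  assert (Hq0 : 0 <= q) by (unfold q; apply sqrt_pos).
  assert (Hqm : Rabs m < q).
  { destruct (Rle_dec 0 m). rewrite Rabs_right by lra. nra. rewrite Rabs_left by lra. nra. }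
  apply Rabs_def2 in Hqm.
  split; [|split; [|split]].
  - apply Rdiv_lt_0_compat; lra.
  - apply Rdiv_lt_0_compat; lra.
  - replace ((q + m) / sigma ^ 2 * ((q - m) / sigma ^ 2)) with ((q*q - m^2)/(sigma^2*sigma^2)) by (field; lra). rewrite Hq2. field. lra.
  - field. lra.
Qed.

Lemma Psi_inj a1 a2 g1 g2 mu sigma b u0 r d x y : 0 < sigma -> 0 < a1 -> 0 < a2 ->
  0 < g1 -> 0 < g2 -> 0 < b -> 0 < r -> 0 < x <= d -> 0 < y <= d ->
  a1 * a2 = 2 * r / sigma ^ 2 -> a1 - a2 = 2 * (mu - u0) / sigma ^ 2 ->
  g1 * g2 = 2 * r / sigma ^ 2 -> g1 - g2 = 2 * mu / sigma ^ 2 ->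
  Psi a1 a2 g1 g2 b u0 r d x = Psi a1 a2 g1 g2 b u0 r d y -> x = y.
Proof.
  intros until 13. intro HE. destruct (Rtotal_order x y) as [Hxy|[Hxy|Hxy]]; auto.
  - pose proof (Psi_incr a1 a2 g1 g2 mu sigma b u0 r d x y). exfalso.
    assert (Psi a1 a2 g1 g2 b u0 r d x < Psi a1 a2 g1 g2 b u0 r d y) by (apply H12; auto; lra). lra.
  - pose proof (Psi_incr a1 a2 g1 g2 mu sigma b u0 r d y x). exfalso.
    assert (Psi a1 a2 g1 g2 b u0 r d y < Psi a1 a2 g1 g2 b u0 r d x) by (apply H12; auto; lra). lra.
Qed.

Lemma GS1 mu sigma u0 r beta d C z : 0 < sigma -> 0 < r ->
  good_switch mu sigma u0 r beta d C z ->
  0 < z < d /\ C = Psi (theta1 mu sigma r u0) (theta2 mu sigma r u0)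
        (theta1 mu sigma r 0) (theta2 mu sigma r 0) beta u0 r d z.
Proof.
  intros Hs Hr [Hz [f1 [f2 [[_ [Hder _]] _]]]].
  destruct (theta_facts mu sigma r 0 Hs Hr) as [Hg1 [Hg2 _]].
  split; auto.
  apply iffC; auto.
  rewrite <- Ffun_Fa, <- Gfun_Ga.
  pose proof (jump _ _ (Gfun mu sigma r beta d C z) d z Hder ltac:(lra)) as J.
  assert (HF : fC mu sigma u0 r beta d C z z = Ffun mu sigma u0 r beta z z).
  { unfold fC. destruct (Rle_dec z z); [reflexivity|lra]. }
  rewrite <- HF. apply J.
  - apply (der_ctn _ _ _ (Ga_der (theta1 mu sigma r 0) (theta2 mu sigma r 0) beta d C z z)).
  - intros y Hy. unfold fC. destruct (Rle_dec y z); [lra|reflexivity].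
Qed.

Lemma GS2 mu sigma u0 r beta d C z : 0 < sigma -> 0 < u0 -> 0 < r -> 0 < beta ->
  0 < z < d ->
  C = Psi (theta1 mu sigma r u0) (theta2 mu sigma r u0)
        (theta1 mu sigma r 0) (theta2 mu sigma r 0) beta u0 r d z ->
  good_switch mu sigma u0 r beta d C z.
Proof.
  intros Hs Hu Hr Hb Hz HC.
  destruct (theta_facts mu sigma r u0 Hs Hr) as [Ha1 [Ha2 [Hap Had]]].
  destruct (theta_facts mu sigma r 0 Hs Hr) as [Hg1 [Hg2 [Hgp Hgd]]].
  replace (mu - 0) with mu in Hgd by ring.
  set (a1 := theta1 mu sigma r u0) in *. set (a2 := theta2 mu sigma r u0) in *.
  set (g1 := theta1 mu sigma r 0) in *. set (g2 := theta2 mu sigma r 0) in *.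
  assert (HFG : Fa a1 a2 beta u0 r z z = Ga g1 g2 beta d C z z) by (apply iffC; auto).
  assert (HM0 : 0 < exp(a1*z) - exp(-a2*z)) by (apply Mpos; lra).
  assert (HM : exp(a1*z) - exp(-a2*z) <> 0) by lra.
  assert (H1 : Fd1 a1 a2 beta z z = Gd1 g1 g2 beta d C z z).
  { rewrite Fd1_s, Gd1_s; auto. }
  assert (H2 : Fd2 a1 a2 beta z z = Gd2 g1 g2 beta d C z z).
  { pose proof (ODE_F a1 a2 mu sigma u0 r beta z z Hs Ha1 Ha2 Hap Had HM) as O1.
    pose proof (ODE_G g1 g2 mu sigma r beta d C z z Hs Hg1 Hg2 Hgp Hgd) as O2.
    rewrite Fd1_s in O1 by auto. rewrite Gd1_s in O2 by auto.
    assert (Hs2 : 0 < sigma^2/2) by (assert (0 < sigma^2) by (apply pow_lt; lra); lra).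
    apply (Rmult_eq_reg_l (sigma^2/2)); [|lra].
    rewrite HFG in O1. lra. }
  assert (HdF : forall x, derivable_pt_lim (Fa a1 a2 beta u0 r z) x (Fd1 a1 a2 beta z x))
    by (intros; apply Fa_der; lra).
  assert (HdF1 : forall x, derivable_pt_lim (Fd1 a1 a2 beta z) x (Fd2 a1 a2 beta z x))
    by (intros; apply Fd1_der; lra).
  assert (HdF2 : forall x, derivable_pt_lim (Fd2 a1 a2 beta z) x (Fd3 a1 a2 beta z x))
    by (intros; apply Fd2_der; lra).
  assert (HdG : forall x, derivable_pt_lim (Ga g1 g2 beta d C z) x (Gd1 g1 g2 beta d C z x))
    by (intros; apply Ga_der).
  assert (HdG1 : forall x, derivable_pt_lim (Gd1 g1 g2 beta d C z) x (Gd2 g1 g2 beta d C z x))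
    by (intros; apply Gd1_der).
  assert (HdG2 : forall x, derivable_pt_lim (Gd2 g1 g2 beta d C z) x (Gd3 g1 g2 beta d C z x))
    by (intros; apply Gd2_der).
  pose proof (pw_der _ _ _ _ z HdF HdG HFG H1) as Pf.
  pose proof (pw_der _ _ _ _ z HdF1 HdG1 H1 H2) as Pf1.
  assert (Pf2 : forall x, ctn (pw (Fd2 a1 a2 beta z) (Gd2 g1 g2 beta d C z) z) x).
  { apply pw_ctn; auto; intro x. eapply der_ctn; apply HdF2. eapply der_ctn; apply HdG2. }
  split; auto.
  exists (pw (Fd1 a1 a2 beta z) (Gd1 g1 g2 beta d C z) z).
  exists (pw (Fd2 a1 a2 beta z) (Gd2 g1 g2 beta d C z) z).
  change (fC mu sigma u0 r beta d C z) with (pw (Fa a1 a2 beta u0 r z) (Ga g1 g2 beta d C z) z).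
  split; [|split].
  - split; [|split; [|split; [|split]]].
    + assert (Hc : forall c, 0 <= c <= d -> continuity_pt (pw (Fa a1 a2 beta u0 r z) (Ga g1 g2 beta d C z) z) c).
      { intros c _. apply ctn_pt. eapply der_ctn. apply Pf. }
      destruct (continuity_ab_maj _ 0 d ltac:(lra) Hc) as [Mx [HMx _]].
      destruct (continuity_ab_min _ 0 d ltac:(lra) Hc) as [mx [Hmx _]].
      set (f := pw (Fa a1 a2 beta u0 r z) (Ga g1 g2 beta d C z) z) in *.
      exists (Rabs (f Mx) + Rabs (f mx)). intros y Hy. apply Rabs_le.
      specialize (HMx y Hy). specialize (Hmx y Hy).
      pose proof (Rle_abs (f Mx)). pose proof (Rabs_maj2 (f mx)).
      pose proof (Rabs_pos (f Mx)). pose proof (Rabs_pos (f mx)). lra.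
    + apply der_on. exact Pf.
    + apply der_on. exact Pf1.
    + apply ctn_on. exact Pf2.
    + intros y Hy. unfold pw. destruct (Rle_dec y z) as [Hyz|Hyz].
      * exists ((beta + Fd1 a1 a2 beta z y) * u0). split.
        -- apply lub_pos; auto. apply F_sign; lra.
        -- apply ODE_F; auto.
      * exists 0. split.
        -- apply lub_neg; auto. apply G_sign; auto; try lra.
           rewrite <- H2. apply Fd2_neg; lra.
        -- rewrite Rplus_0_r. apply ODE_G; auto.
  - unfold pw. destruct (Rle_dec 0 z); [|lra]. apply Fd1_0.
  - unfold pw. destruct (Rle_dec d z); [lra|]. apply Ga_d.
Qed.

Theorem proposition4p5 (mu sigma u0 r beta d : R) :
  0 < sigma -> 0 < u0 -> 0 < r -> 0 < beta -> 0 < d ->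
  (forall C, admissible mu sigma u0 r beta d C ->
     exists! z, good_switch mu sigma u0 r beta d C z) /\
  (forall C1 C2 z1 z2,
     admissible mu sigma u0 r beta d C1 -> admissible mu sigma u0 r beta d C2 ->
     C1 < C2 ->
     good_switch mu sigma u0 r beta d C1 z1 -> good_switch mu sigma u0 r beta d C2 z2 ->
     z1 < z2) /\
  (Ffun mu sigma u0 r beta d d = Gfun mu sigma r beta d (xi1 mu sigma u0 r beta d) d d /\
   forall s, 0 < s <= d ->
     Ffun mu sigma u0 r beta s s = Gfun mu sigma r beta d (xi1 mu sigma u0 r beta d) s s ->
     s = d).
Proof.
  intros Hs Hu Hr Hb Hd.
  destruct (theta_facts mu sigma r u0 Hs Hr) as [Ha1 [Ha2 [Hap Had]]].
  destruct (theta_facts mu sigma r 0 Hs Hr) as [Hg1 [Hg2 [Hgp Hgd]]].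
  replace (mu - 0) with mu in Hgd by ring.
  assert (Hxi : xi1 mu sigma u0 r beta d =
     Psi (theta1 mu sigma r u0) (theta2 mu sigma r u0)
        (theta1 mu sigma r 0) (theta2 mu sigma r 0) beta u0 r d d).
  { rewrite Psi_d by auto. reflexivity. }
  set (a1 := theta1 mu sigma r u0) in *. set (a2 := theta2 mu sigma r u0) in *.
  set (g1 := theta1 mu sigma r 0) in *. set (g2 := theta2 mu sigma r 0) in *.
  set (Ps := Psi a1 a2 g1 g2 beta u0 r d) in *.
  assert (Hinj : forall x y, 0 < x <= d -> 0 < y <= d -> Ps x = Ps y -> x = y).
  { intros x y Hx Hy. apply (Psi_inj a1 a2 g1 g2 mu sigma beta u0 r d); auto. }
  assert (Hinc : forall x y, 0 < x -> x < y -> y <= d -> Ps x < Ps y).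
  { intros x y Hx Hxy Hy. apply (Psi_incr a1 a2 g1 g2 mu sigma beta u0 r d); auto. }
  split; [|split; [|split]].
  - intros C [_ HC].
    destruct (exists_low a1 a2 g1 g2 beta u0 r d C) as [s0 [Hs0 HPs0]]; auto.
    assert (Hcont : forall a, s0 <= a <= d -> continuity_pt (fun s => Ps s - C) a).
    { intros a Ha. apply continuity_pt_minus.
      - apply ctn_pt. eapply der_ctn. apply Psi_der; auto; lra.
      - apply continuity_pt_const. intros x y; reflexivity. }
    destruct (Ranalysis5.IVT_interv (fun s => Ps s - C) s0 d Hcont ltac:(lra)
      ltac:(cbv beta; unfold Ps in *; lra) ltac:(cbv beta; unfold Ps in *; lra)) as [z [Hz Hz0]].
    cbv beta in Hz0.
    assert (Hzd : z <> d) by (intro; subst z; lra).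
    exists z. split.
    + apply GS2; auto; [lra|]. fold a1 a2 g1 g2 Ps. lra.
    + intros z' Hz'. apply GS1 in Hz'; auto. destruct Hz' as [Hz'1 Hz'2].
      apply Hinj; try lra. fold a1 a2 g1 g2 Ps in Hz'2. lra.
  - intros C1 C2 z1 z2 _ _ HC H1 H2.
    apply GS1 in H1; auto. apply GS1 in H2; auto.
    destruct H1 as [Hz1 E1]. destruct H2 as [Hz2 E2].
    fold a1 a2 g1 g2 Ps in E1, E2.
    destruct (Rtotal_order z1 z2) as [H|[H|H]]; auto.
    + subst. lra.
    + assert (Ps z2 < Ps z1) by (apply Hinc; lra). lra.
  - rewrite Ffun_Fa, Gfun_Ga. fold a1 a2 g1 g2. rewrite Ga_d. reflexivity.
  - intros s Hs0 HE. rewrite Ffun_Fa, Gfun_Ga in HE. fold a1 a2 g1 g2 in HE.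
    apply iffC in HE; auto. fold Ps in HE. apply Hinj; auto. lra. lra.
Qed.
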